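(* Let $\mathbf{u}=(u_1,u_2),\mathbf{v}=(v_1,v_2)\in\mathbb{R}^2$ be fixed linearly independent unit vectors, and let $D_1\subset\mathbb{R}^2$ be an open disc centered at the origin. Let $\mathbf{f}=(f_1,f_2)$ be a vector field on $\mathbb{R}^2$ with $f_1,f_2\in C^2_c(D_1)$. Then $$\operatorname{div}\mathbf{f}=-\frac{1}{\det(\mathbf{v},\mathbf{u})}\,D_{\mathbf{u}}D_{\mathbf{v}}\,\mathcal{T}\mathbf{f},$$ where $\det(\mathbf{v},\mathbf{u})=v_1u_2-u_1v_2$. In particular, the operator $\mathcal{T}$ is injective (invertible) on compactly supported (in $D_1$, with $C^2$ components) curl-free vector fields.
   Context: For a function $h$ on $\mathbb{R}^2$ and a unit vector $\mathbf{u}$, $\mathcal{X}_{\mathbf{u}}h(\mathbf{x})=\int_0^\infty h(\mathbf{x}+t\mathbf{u})\,dt$ and $D_{\mathbf{u}}h=\mathbf{u}\cdot\nabla h$. For $\mathbf{x}=(x_1,x_2)$ set $\mathbf{x}^\perp=(-x_2,x_1)$. The transverse V-line transform is $\mathcal{T}\mathbf{f}=-\mathcal{X}_{\mathbf{u}}(\mathbf{f}\cdot\mathbf{u}^\perp)+\mathcal{X}_{\mathbf{v}}(\mathbf{f}\cdot\mathbf{v}^\perp)$, a function on $\mathbb{R}^2$. Here $\operatorname{div}\mathbf{f}=\frac{\partial f_1}{\partial x_1}+\frac{\partial f_2}{\partial x_2}$ and curl-free means $\frac{\partial f_2}{\partial x_1}-\frac{\partial f_1}{\partial x_2}=0$.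 *)

(* Defs.v *)
From Stdlib Require Import Reals.
From Coquelicot Require Import Coquelicot.
Open Scope R_scope.

Definition pt := (R * R)%type.

Definition d1 (h : pt -> R) (x : pt) : R := Derive (fun t => h (t, snd x)) (fst x).
Definition d2 (h : pt -> R) (x : pt) : R := Derive (fun t => h (fst x, t)) (snd x).

Definition C1 (h : pt -> R) : Prop :=
  (forall x : pt, ex_derive (fun t => h (t, snd x)) (fst x)
               /\ ex_derive (fun t => h (fst x, t)) (snd x)) /\
  (forall x : pt, continuous h x /\ continuous (d1 h) x /\ continuous (d2 h) x).

Definition C2 (h : pt -> R) : Prop := C1 h /\ C1 (d1 h) /\ C1 (d2 h).

Definition in_disc (rho : R) (x : pt) : Prop := fst x ^ 2 + snd x ^ 2 < rho ^ 2.

(* h in C_c(D) for D the open disc of radius rho: the support of h (closure of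
   {h <> 0}) is a compact subset of D, i.e. contained in a closed disc of
   radius r < rho centered at the origin. *)
Definition compact_support_in_disc (rho : R) (h : pt -> R) : Prop :=
  exists r : R, 0 <= r /\ r < rho /\
    forall x : pt, r ^ 2 < fst x ^ 2 + snd x ^ 2 -> h x = 0.

Definition C2c_disc (rho : R) (h : pt -> R) : Prop :=
  C2 h /\ compact_support_in_disc rho h.

Definition shift (x : pt) (t : R) (u : pt) : pt :=
  (fst x + t * fst u, snd x + t * snd u).

Definition Xray (u : pt) (h : pt -> R) (x : pt) : R :=
  RInt_gen (fun t => h (shift x t u)) (at_point 0) (Rbar_locally p_infty).

Definition Ddir (u : pt) (h : pt -> R) (x : pt) : R :=
  fst u * d1 h x + snd u * d2 h x.

Definition perp (x : pt) : pt := (- snd x, fst x).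

Definition dot (a b : pt) : R := fst a * fst b + snd a * snd b.

Definition fdot (f1 f2 : pt -> R) (w : pt) : pt -> R :=
  fun x => dot (f1 x, f2 x) w.

Definition Tvl (u v : pt) (f1 f2 : pt -> R) (x : pt) : R :=
  - Xray u (fdot f1 f2 (perp u)) x + Xray v (fdot f1 f2 (perp v)) x.

Definition divf (f1 f2 : pt -> R) (x : pt) : R := d1 f1 x + d2 f2 x.

Definition curl_free (f1 f2 : pt -> R) : Prop :=
  forall x : pt, d1 f2 x - d2 f1 x = 0.

Definition det2 (v u : pt) : R := fst v * snd u - fst u * snd v.

(* Main.v *)
Require Import Defs.
From Stdlib Require Import Reals.
From Coquelicot Require Import Coquelicot.
From Stdlib Require Import Lra FunctionalExtensionality.
Open Scope R_scope.
Import Defs.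

From Stdlib Require Import Reals Lra.
From Coquelicot Require Import Coquelicot.
Open Scope R_scope.
Import Defs.

Lemma cont2d (H : pt -> R) a b : continuous H (a,b) -> continuity_2d_pt (fun x y => H (x,y)) a b.
Proof. intro Hc. apply continuity_2d_pt_filterlim. eapply filterlim_ext; [|exact Hc]. intros [x y]; reflexivity. Qed.

Lemma cont_comp (H : pt -> R) (F G : pt -> R) p :
  continuous H (F p, G p) -> continuous F p -> continuous G p -> continuous (fun q => H (F q, G q)) p.
Proof.
  intros Hc HF HG. apply (continuous_comp_2 F G (fun a b => H (a,b))); auto.
  eapply filterlim_ext; [|exact Hc]. intros [x y]; reflexivity.
Qed.

Lemma abs_between x u c : Rmin x u <= c <= Rmax x u -> Rabs (c - x) <= Rabs (u - x).
Proof.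
  unfold Rmin, Rmax; destruct (Rle_dec x u); intros [H1 H2];
  unfold Rabs; destruct (Rcase_abs (c - x)); destruct (Rcase_abs (u - x)); lra.
Qed.

Lemma diff_partials (f : R -> R -> R) x y :
 (forall u v, ex_derive (fun z => f z v) u) ->
 (forall u v, ex_derive (fun z => f u z) v) ->
 continuity_2d_pt (fun u v => Derive (fun z => f z v) u) x y ->
 continuity_2d_pt (fun u v => Derive (fun z => f u z) v) x y ->
 differentiable_pt_lim f x y (Derive (fun z => f z y) x) (Derive (fun z => f x z) y).
Proof.
 intros D1 D2 C1 C2 eps.
 assert (he: 0 < eps/2) by (destruct eps; simpl; lra).
 destruct (C1 (mkposreal _ he)) as [d1 Hd1]. destruct (C2 (mkposreal _ he)) as [d2 Hd2].
 assert (hd: 0 < Rmin d1 d2) by (apply Rmin_pos; apply cond_pos).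
 exists (mkposreal _ hd). intros u v Hu Hv. simpl in Hu, Hv.
 assert (Hu1 : Rabs (u - x) < d1) by (eapply Rlt_le_trans; [exact Hu| apply Rmin_l]).
 assert (Hu2 : Rabs (u - x) < d2) by (eapply Rlt_le_trans; [exact Hu| apply Rmin_r]).
 assert (Hv1 : Rabs (v - y) < d1) by (eapply Rlt_le_trans; [exact Hv| apply Rmin_l]).
 assert (Hv2 : Rabs (v - y) < d2) by (eapply Rlt_le_trans; [exact Hv| apply Rmin_r]).
 destruct (MVT_gen (fun z => f z v) x u (fun z => Derive (fun t => f t v) z)) as [c [Hc Ec]].
 { intros; apply Derive_correct; auto. }
 { intros; apply (continuity_pt_filterlim (fun z => f z v)); apply (ex_derive_continuous (fun z => f z v)); auto. }
 destruct (MVT_gen (fun z => f x z) y v (fun z => Derive (fun t => f x t) z)) as [c' [Hc' Ec']].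
 { intros; apply Derive_correct; auto. }
 { intros; apply (continuity_pt_filterlim (fun z => f x z)); apply (ex_derive_continuous (fun z => f x z)); auto. }
 simpl in Ec, Ec'.
 pose proof (abs_between _ _ _ Hc) as Bc.
 pose proof (abs_between _ _ _ Hc') as Bc'.
 assert (E1 : Rabs (Derive (fun t => f t v) c - Derive (fun z => f z y) x) < eps/2).
 { apply (Hd1 c v); lra. }
 assert (E2 : Rabs (Derive (fun t => f x t) c' - Derive (fun z => f x z) y) < eps/2).
 { apply (Hd2 x c'). rewrite Rminus_eq_0, Rabs_R0; apply cond_pos. lra. }
 set (A := Derive (fun t => f t v) c) in *.
 set (B := Derive (fun t => f x t) c') in *.
 set (lx := Derive (fun z => f z y) x) in *.
 set (ly := Derive (fun z => f x z) y) in *.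
 replace (f u v - f x y - (lx * (u - x) + ly * (v - y))) with
   ((A - lx) * (u - x) + (B - ly) * (v - y)) by lra.
 eapply Rle_trans; [apply Rabs_triang|]. rewrite !Rabs_mult.
 assert (M1 := Rmax_l (Rabs (u - x)) (Rabs (v - y))).
 assert (M2 := Rmax_r (Rabs (u - x)) (Rabs (v - y))).
 assert (0 <= Rabs (u - x)) by apply Rabs_pos.
 assert (0 <= Rabs (v - y)) by apply Rabs_pos.
 assert (0 <= Rabs (A - lx)) by apply Rabs_pos.
 assert (0 <= Rabs (B - ly)) by apply Rabs_pos.
 simpl. nra.
Qed.

Lemma C1_diff h (HC : C1 h) p : differentiable_pt_lim (fun a b => h (a,b)) (fst p) (snd p) (d1 h p) (d2 h p).
Proof.
  destruct p as [a b].
  apply (diff_partials (fun a b => h (a,b))).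
  - intros u v; exact (proj1 (proj1 HC (u,v))).
  - intros u v; exact (proj2 (proj1 HC (u,v))).
  - apply (cont2d (d1 h)); exact (proj1 (proj2 (proj2 HC (a,b)))).
  - apply (cont2d (d2 h)); exact (proj2 (proj2 (proj2 HC (a,b)))).
Qed.

Lemma chain h (HC: C1 h) x w t0 : is_derive (fun t => h (shift x t w)) t0 (Ddir w h (shift x t0 w)).
Proof.
  apply is_derive_Reals. unfold shift.
  pose (p := shift x t0 w).
  assert (L1 : derivable_pt_lim (fun t => fst x + t * fst w) t0 (fst w)).
  { apply is_derive_Reals. auto_derive; auto; ring. }
  assert (L2 : derivable_pt_lim (fun t => snd x + t * snd w) t0 (snd w)).
  { apply is_derive_Reals. auto_derive; auto; ring. }
  pose proof (derivable_pt_lim_comp_2d (fun a b => h(a,b)) (fun t => fst x + t*fst w) (fun t => snd x + t * snd w) t0 (d1 h p) (d2 h p) (fst w) (snd w) (C1_diff h HC p) L1 L2) as K.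
  unfold Ddir. replace (fst w * d1 h (fst x + t0 * fst w, snd x + t0 * snd w) +
   snd w * d2 h (fst x + t0 * fst w, snd x + t0 * snd w)) with (d1 h p * fst w + d2 h p * snd w)
   by (unfold p, shift; ring).
  exact K.
Qed.

Definition supp (r : R) (h : pt -> R) := forall x : pt, r^2 < fst x^2 + snd x^2 -> h x = 0.

Lemma loc_gt (phi : R -> R) x c : continuous phi x -> c < phi x -> locally x (fun t => c < phi t).
Proof.
  intros Hc H. apply (Hc (fun y => c < y)).
  assert (hp : 0 < phi x - c) by lra.
  exists (mkposreal _ hp). intros y Hy. simpl in Hy.
  unfold ball in Hy; simpl in Hy; unfold AbsRing_ball, abs, minus, plus, opp in Hy; simpl in Hy.
  apply Rabs_lt_between in Hy. lra.
Qed.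

Lemma supp_d1 r h : supp r h -> supp r (d1 h).
Proof.
  intros S [a b] H. unfold d1; cbn [fst snd]. cbn [fst snd] in H.
  rewrite (Derive_ext_loc _ (fun _ => 0)). apply Derive_const.
  assert (L : locally a (fun t => r^2 < t^2 + b^2)).
  { apply loc_gt; auto. apply (ex_derive_continuous (fun t => t^2 + b^2)). auto_derive; auto. }
  eapply filter_imp; [|exact L]. intros t Ht. apply S. cbn [fst snd]. exact Ht.
Qed.

Lemma supp_d2 r h : supp r h -> supp r (d2 h).
Proof.
  intros S [a b] H. unfold d2; cbn [fst snd]. cbn [fst snd] in H.
  rewrite (Derive_ext_loc _ (fun _ => 0)). apply Derive_const.
  assert (L : locally b (fun t => r^2 < a^2 + t^2)).
  { apply loc_gt; auto. apply (ex_derive_continuous (fun t => a^2 + t^2)). auto_derive; auto. }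
  eapply filter_imp; [|exact L]. intros t Ht. apply S. cbn [fst snd]. exact Ht.
Qed.

Definition Lb (r : R) (y : pt) := 2 * (Rabs (fst y) + Rabs (snd y)) + Rabs r + 1.

Lemma ray_zero u h r y t : fst u ^ 2 + snd u ^ 2 = 1 -> supp r h -> Lb r y <= t -> h (shift y t u) = 0.
Proof.
  intros hu S Ht. apply S. unfold shift, Lb in *; simpl.
  destruct y as [y1 y2]; destruct u as [u1 u2]; simpl in *.
  assert (a1 : Rabs u1 <= 1).
  { apply Rabs_le; split; nra. }
  assert (a2 : Rabs u2 <= 1).
  { apply Rabs_le; split; nra. }
  assert (b1 : - Rabs y1 <= y1 * u1).
  { assert (Rabs (y1 * u1) <= Rabs y1) by (rewrite Rabs_mult; pose proof (Rabs_pos y1); nra).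
    pose proof (Rle_abs (- (y1 * u1))). rewrite Rabs_Ropp in H0. lra. }
  assert (b2 : - Rabs y2 <= y2 * u2).
  { assert (Rabs (y2 * u2) <= Rabs y2) by (rewrite Rabs_mult; pose proof (Rabs_pos y2); nra).
    pose proof (Rle_abs (- (y2 * u2))). rewrite Rabs_Ropp in H0. lra. }
  pose proof (Rabs_pos y1). pose proof (Rabs_pos y2). pose proof (Rabs_pos r).
  assert (r ^ 2 = Rabs r ^ 2) by (rewrite <- (pow2_abs r); reflexivity).
  assert (t * (t - 2 * (Rabs y1 + Rabs y2)) >= (Rabs r + 1) * (Rabs r + 1)) by nra.
  nra.
Qed.

Lemma cont_compU {U : UniformSpace} (H : pt -> R) (F G : U -> R) p :
  continuous H (F p, G p) -> continuous F p -> continuous G p -> continuous (fun q => H (F q, G q)) p.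
Proof.
  intros Hc HF HG. apply (continuous_comp_2 F G (fun a b => H (a,b))); auto.
  eapply filterlim_ext; [|exact Hc]. intros [x y]; reflexivity.
Qed.

Lemma cF1 c (p : pt) : continuous (fun q : pt => fst q + snd q * c) p.
Proof.
  destruct p as [a b].
  apply (continuous_plus (fun q : pt => fst q) (fun q : pt => snd q * c)).
  apply continuous_fst.
  apply (continuous_mult (fun q : pt => snd q) (fun _ => c)). apply continuous_snd. apply continuous_const.
Qed.

Lemma cF2 a c (p : pt) : continuous (fun q : pt => a + snd q * c) p.
Proof.
  destruct p as [x y].
  apply (continuous_plus (fun q : pt => a) (fun q : pt => snd q * c)).
  apply continuous_const.
  apply (continuous_mult (fun q : pt => snd q) (fun _ => c)). apply continuous_snd. apply continuous_const.
Qed.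

Lemma cont_ray (h : pt -> R) y u t : (forall p, continuous h p) -> continuous (fun t => h (shift y t u)) t.
Proof.
  intro Hc. unfold shift.
  apply (cont_compU h (fun t => fst y + t * fst u) (fun t => snd y + t * snd u)); auto.
  apply (ex_derive_continuous (fun t => fst y + t * fst u)); auto_derive; auto.
  apply (ex_derive_continuous (fun t => snd y + t * snd u)); auto_derive; auto.
Qed.

Lemma Xray_red u h y L : (forall t, L <= t -> h (shift y t u) = 0) ->
  (forall t, continuous (fun t => h (shift y t u)) t) ->
  Xray u h y = RInt (fun t => h (shift y t u)) 0 L.
Proof.
  intros Z Hc. unfold Xray. apply is_RInt_gen_unique.
  unfold is_RInt_gen, filterlimi, filter_le, filtermapi. intros P HP.
  apply Filter_prod with (fun a => a = 0) (fun b => L < b).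
  - unfold at_point; reflexivity.
  - exists L; intros; lra.
  - intros a b -> Hb. exists (RInt (fun t => h (shift y t u)) 0 L). split; [|apply locally_singleton; exact HP].
    simpl.
    assert (E : forall c d, ex_RInt (fun t => h (shift y t u)) c d) by (intros; apply (@ex_RInt_continuous R_CompleteNormedModule); intros; auto).
    replace (RInt (fun t => h (shift y t u)) 0 L) with (RInt (fun t => h (shift y t u)) 0 b).
    apply RInt_correct; auto.
    rewrite <- (RInt_Chasles _ 0 L b); auto.
    rewrite (RInt_ext _ (fun _ => 0) L b).
    rewrite RInt_const. unfold scal; simpl; unfold mult; simpl. unfold plus; simpl. ring.
    intros t Ht. apply Z. rewrite Rmin_left in Ht; lra.
Qed.

Lemma ball_abs (a z : R) : ball a 1 z -> Rabs z <= Rabs a + 1.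
Proof.
  intro Hz. change (Rabs (z - a) < 1) in Hz.
  pose proof (Rabs_triang (z - a) a). replace (z - a + a) with z in H by ring. lra.
Qed.

Lemma Lb_ball1 r (x : pt) z t : ball (fst x) 1 z -> Lb r x + 4 <= t -> Lb r (z, snd x) <= t.
Proof. intros Hz Ht. pose proof (ball_abs _ _ Hz). unfold Lb in *. cbn [fst snd] in *. lra. Qed.
Lemma Lb_ball2 r (x : pt) z t : ball (snd x) 1 z -> Lb r x + 4 <= t -> Lb r (fst x, z) <= t.
Proof. intros Hz Ht. pose proof (ball_abs _ _ Hz). unfold Lb in *. cbn [fst snd] in *. lra. Qed.

Lemma XA1 u h r x : fst u^2+snd u^2 = 1 -> C1 h -> supp r h ->
  is_derive (fun z => Xray u h (z, snd x)) (fst x) (Xray u (d1 h) x).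
Proof.
 intros hu HC S.
 assert (Hc : forall p, continuous h p) by (intro p; exact (proj1 (proj2 HC p))).
 assert (Hc1 : forall p, continuous (d1 h) p) by (intro p; exact (proj1 (proj2 (proj2 HC p)))).
 set (L := Lb r x + 4).
 assert (HL: Lb r x <= L) by (unfold L; lra).
 assert (DE : forall z t, is_derive (fun z => h (shift (z, snd x) t u)) z (d1 h (shift (z, snd x) t u))).
 { intros z t. unfold shift; cbn [fst snd].
   pose proof (Derive_correct _ _ (proj1 (proj1 HC (z + t * fst u, snd x + t * snd u)))) as K. cbn [fst snd] in K.
   assert (G : is_derive (fun z => z + t * fst u) z 1) by (auto_derive; auto; ring).
   pose proof (is_derive_comp (fun s => h (s, snd x + t * snd u)) (fun z => z + t * fst u) z _ 1 K G) as K2.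
   unfold scal in K2; simpl in K2; unfold mult in K2; simpl in K2; rewrite Rmult_1_l in K2. exact K2. }
 apply is_derive_ext_loc with (f := fun z => RInt (fun t => h (shift (z, snd x) t u)) 0 L).
 { exists (mkposreal 1 Rlt_0_1). intros z Hz. symmetry. apply Xray_red.
   - intros t Ht. apply (ray_zero u h r); auto. apply (Lb_ball1 r x z t Hz Ht).
   - intros; apply cont_ray; auto. }
 rewrite (Xray_red u (d1 h) x L).
 2: { intros t Ht; apply (ray_zero u (d1 h) r); auto; [apply supp_d1; auto | lra]. }
 2: { intros; apply cont_ray; auto. }
 replace (RInt (fun t => d1 h (shift x t u)) 0 L) with (RInt (fun t => Derive (fun z => h (shift (z, snd x) t u)) (fst x)) 0 L).
 2: { apply RInt_ext. intros t _. apply is_derive_unique. exact (DE (fst x) t). }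
 apply (is_derive_RInt_param (fun z t => h (shift (z, snd x) t u)) 0 L (fst x)).
 - apply filter_forall. intros z t _. eexists; apply DE.
 - intros t _. apply continuity_2d_pt_ext with (f := fun z t => d1 h (shift (z, snd x) t u)).
   { intros z s. symmetry. apply is_derive_unique. apply DE. }
   apply (cont2d (fun q => d1 h (fst q + snd q * fst u, snd x + snd q * snd u))).
   apply (cont_compU (d1 h) (fun q : pt => fst q + snd q * fst u) (fun q : pt => snd x + snd q * snd u)); auto; [apply cF1 | apply cF2].
 - apply filter_forall. intros z. apply (@ex_RInt_continuous R_CompleteNormedModule). intros; apply cont_ray; auto.
Qed.

Lemma XA2 u h r x : fst u^2+snd u^2 = 1 -> C1 h -> supp r h ->
  is_derive (fun z => Xray u h (fst x, z)) (snd x) (Xray u (d2 h) x).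
Proof.
 intros hu HC S.
 assert (Hc : forall p, continuous h p) by (intro p; exact (proj1 (proj2 HC p))).
 assert (Hc1 : forall p, continuous (d2 h) p) by (intro p; exact (proj2 (proj2 (proj2 HC p)))).
 set (L := Lb r x + 4).
 assert (HL: Lb r x <= L) by (unfold L; lra).
 assert (DE : forall z t, is_derive (fun z => h (shift (fst x, z) t u)) z (d2 h (shift (fst x, z) t u))).
 { intros z t. unfold shift; cbn [fst snd].
   pose proof (Derive_correct _ _ (proj2 (proj1 HC (fst x + t * fst u, z + t * snd u)))) as K. cbn [fst snd] in K.
   assert (G : is_derive (fun z => z + t * snd u) z 1) by (auto_derive; auto; ring).
   pose proof (is_derive_comp (fun s => h (fst x + t * fst u, s)) (fun z => z + t * snd u) z _ 1 K G) as K2.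
   unfold scal in K2; simpl in K2; unfold mult in K2; simpl in K2; rewrite Rmult_1_l in K2. exact K2. }
 apply is_derive_ext_loc with (f := fun z => RInt (fun t => h (shift (fst x, z) t u)) 0 L).
 { exists (mkposreal 1 Rlt_0_1). intros z Hz. symmetry. apply Xray_red.
   - intros t Ht. apply (ray_zero u h r); auto. apply (Lb_ball2 r x z t Hz Ht).
   - intros; apply cont_ray; auto. }
 rewrite (Xray_red u (d2 h) x L).
 2: { intros t Ht; apply (ray_zero u (d2 h) r); auto; [apply supp_d2; auto | lra]. }
 2: { intros; apply cont_ray; auto. }
 replace (RInt (fun t => d2 h (shift x t u)) 0 L) with (RInt (fun t => Derive (fun z => h (shift (fst x, z) t u)) (snd x)) 0 L).
 2: { apply RInt_ext. intros t _. apply is_derive_unique. exact (DE (snd x) t). }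
 apply (is_derive_RInt_param (fun z t => h (shift (fst x, z) t u)) 0 L (snd x)).
 - apply filter_forall. intros z t _. eexists; apply DE.
 - intros t _. apply continuity_2d_pt_ext with (f := fun z t => d2 h (shift (fst x, z) t u)).
   { intros z s. symmetry. apply is_derive_unique. apply DE. }
   apply (cont2d (fun q => d2 h (fst x + snd q * fst u, fst q + snd q * snd u))).
   apply (cont_compU (d2 h) (fun q : pt => fst x + snd q * fst u) (fun q : pt => fst q + snd q * snd u)); auto; [apply cF2 | apply cF1].
 - apply filter_forall. intros z. apply (@ex_RInt_continuous R_CompleteNormedModule). intros; apply cont_ray; auto.
Qed.

Lemma cont_lin (p q : pt -> R) a b y : continuous p y -> continuous q y -> continuous (fun x => a * p x + b * q x) y.
Proof.
  intros Hp Hq.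
  apply (continuous_plus (fun x => a * p x) (fun x => b * q x)).
  apply (continuous_mult (fun _ => a) p); auto; apply continuous_const.
  apply (continuous_mult (fun _ => b) q); auto; apply continuous_const.
Qed.

Lemma supp_Ddir r w h : supp r h -> supp r (Ddir w h).
Proof.
  intros S y Hy. unfold Ddir. rewrite (supp_d1 r h S y Hy), (supp_d2 r h S y Hy). ring.
Qed.

Lemma XB u h r x : fst u^2+snd u^2 = 1 -> C1 h -> supp r h -> Xray u (Ddir u h) x = - h x.
Proof.
  intros hu HC S.
  assert (Hc : forall p, continuous h p) by (intro p; exact (proj1 (proj2 HC p))).
  assert (HcD : forall p, continuous (Ddir u h) p).
  { intro p. apply cont_lin; [exact (proj1 (proj2 (proj2 HC p))) | exact (proj2 (proj2 (proj2 HC p)))]. }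
  rewrite (Xray_red u (Ddir u h) x (Lb r x)).
  2: { intros t Ht; apply (ray_zero u (Ddir u h) r); auto. apply supp_Ddir; auto. }
  2: { intros; apply cont_ray; auto. }
  pose proof (Lb r x) as _.
  assert (LB0 : 0 <= Lb r x) by (unfold Lb; pose proof (Rabs_pos (fst x)); pose proof (Rabs_pos (snd x)); pose proof (Rabs_pos r); lra).
  rewrite (is_RInt_unique _ _ _ _ (is_RInt_derive (fun t => h (shift x t u)) (fun t => Ddir u h (shift x t u)) 0 (Lb r x)
     (fun t _ => chain h HC x u t) (fun t _ => cont_ray _ _ _ t HcD))).
  rewrite (ray_zero u h r x (Lb r x)); auto; try lra.
  unfold shift. rewrite !Rmult_0_l, !Rplus_0_r. destruct x. unfold minus, plus, opp; simpl. ring.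
Qed.

Definition exd (p : pt -> R) (x : pt) : Prop :=
  ex_derive (fun t => p (t, snd x)) (fst x) /\ ex_derive (fun t => p (fst x, t)) (snd x).

Lemma d1_lin a p b q x : exd p x -> exd q x ->
  d1 (fun y => a * p y + b * q y) x = a * d1 p x + b * d1 q x.
Proof.
  intros [Hp _] [Hq _]. unfold d1.
  rewrite (Derive_plus (fun t => a * p (t, snd x)) (fun t => b * q (t, snd x))).
  rewrite !Derive_scal. reflexivity.
  apply ex_derive_scal; auto. apply ex_derive_scal; auto.
Qed.

Lemma d2_lin a p b q x : exd p x -> exd q x ->
  d2 (fun y => a * p y + b * q y) x = a * d2 p x + b * d2 q x.
Proof.
  intros [_ Hp] [_ Hq]. unfold d2.
  rewrite (Derive_plus (fun t => a * p (fst x, t)) (fun t => b * q (fst x, t))).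
  rewrite !Derive_scal. reflexivity.
  apply ex_derive_scal; auto. apply ex_derive_scal; auto.
Qed.

Lemma exd_lin a p b q x : exd p x -> exd q x -> exd (fun y => a * p y + b * q y) x.
Proof.
  intros [Hp1 Hp2] [Hq1 Hq2]. split.
  apply (ex_derive_plus (fun t => a * p (t, snd x)) (fun t => b * q (t, snd x))); apply ex_derive_scal; auto.
  apply (ex_derive_plus (fun t => a * p (fst x, t)) (fun t => b * q (fst x, t))); apply ex_derive_scal; auto.
Qed.

Lemma Ddir_lin w a p b q x : exd p x -> exd q x ->
  Ddir w (fun y => a * p y + b * q y) x = a * Ddir w p x + b * Ddir w q x.
Proof.
  intros Hp Hq. unfold Ddir. rewrite d1_lin, d2_lin; auto. ring.
Qed.

Lemma C1_exd h x : C1 h -> exd h x.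
Proof. intro HC. exact (proj1 HC x). Qed.

Lemma C1_lin a p b q : C1 p -> C1 q -> C1 (fun y => a * p y + b * q y).
Proof.
  intros Hp Hq. split.
  - intro x. apply exd_lin; apply C1_exd; auto.
  - intro x. split; [apply cont_lin; [exact (proj1 (proj2 Hp x)) | exact (proj1 (proj2 Hq x))]|]. split.
    + replace (d1 (fun y => a * p y + b * q y)) with (fun y => a * d1 p y + b * d1 q y).
      apply cont_lin; [exact (proj1 (proj2 (proj2 Hp x))) | exact (proj1 (proj2 (proj2 Hq x)))].
      extensionality y. symmetry. apply d1_lin; apply C1_exd; auto.
    + replace (d2 (fun y => a * p y + b * q y)) with (fun y => a * d2 p y + b * d2 q y).
      apply cont_lin; [exact (proj2 (proj2 (proj2 Hp x))) | exact (proj2 (proj2 (proj2 Hq x)))].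
      extensionality y. symmetry. apply d2_lin; apply C1_exd; auto.
Qed.

Lemma C2_lin a p b q : C2 p -> C2 q -> C2 (fun y => a * p y + b * q y).
Proof.
  intros [Hp [Hp1 Hp2]] [Hq [Hq1 Hq2]]. split; [|split].
  - apply C1_lin; auto.
  - replace (d1 (fun y => a * p y + b * q y)) with (fun y => a * d1 p y + b * d1 q y).
    apply C1_lin; auto.
    extensionality y. symmetry. apply d1_lin; apply C1_exd; auto.
  - replace (d2 (fun y => a * p y + b * q y)) with (fun y => a * d2 p y + b * d2 q y).
    apply C1_lin; auto.
    extensionality y. symmetry. apply d2_lin; apply C1_exd; auto.
Qed.

Lemma supp_lin r a p b q : supp r p -> supp r q -> supp r (fun y => a * p y + b * q y).
Proof. intros Sp Sq y Hy. rewrite (Sp y Hy), (Sq y Hy). ring. Qed.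

Lemma supp_mono r1 r h : 0 <= r1 -> r1 <= r -> supp r1 h -> supp r h.
Proof. intros H0 H1 S y Hy. apply S. nra. Qed.

Lemma Xray_red' u (h : pt -> R) r x : fst u^2 + snd u^2 = 1 -> (forall y, continuous h y) -> supp r h ->
  Xray u h x = RInt (fun t => h (shift x t u)) 0 (Lb r x).
Proof.
  intros hu Ch Sh. apply Xray_red.
  - intros; apply (ray_zero u h r); auto.
  - intros; apply cont_ray; auto.
Qed.

Lemma Xray_lin u r a (p : pt -> R) b (q : pt -> R) x : fst u^2 + snd u^2 = 1 ->
  (forall y, continuous p y) -> (forall y, continuous q y) -> supp r p -> supp r q ->
  Xray u (fun y => a * p y + b * q y) x = a * Xray u p x + b * Xray u q x.
Proof.
  intros hu Cp Cq Sp Sq.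
  rewrite (Xray_red' u p r x), (Xray_red' u q r x), (Xray_red' u (fun y => a * p y + b * q y) r x); auto.
  rewrite (RInt_plus (fun t => a * p (shift x t u)) (fun t => b * q (shift x t u))).
  rewrite (RInt_scal (fun t => p (shift x t u))), (RInt_scal (fun t => q (shift x t u))). reflexivity.
  { apply (@ex_RInt_continuous R_CompleteNormedModule); intros; apply cont_ray; auto. }
  { apply (@ex_RInt_continuous R_CompleteNormedModule); intros; apply cont_ray; auto. }
  { apply (@ex_RInt_continuous R_CompleteNormedModule); intros.
    apply (continuous_mult (fun _ => a) (fun t => p (shift x t u))). apply continuous_const. apply cont_ray; auto. }
  { apply (@ex_RInt_continuous R_CompleteNormedModule); intros.
    apply (continuous_mult (fun _ => b) (fun t => q (shift x t u))). apply continuous_const. apply cont_ray; auto. }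
  { intros; apply cont_lin; auto. }
  { apply supp_lin; auto. }
Qed.

Lemma exd_Xray u h r x : fst u^2+snd u^2 = 1 -> C1 h -> supp r h -> exd (Xray u h) x.
Proof.
  intros hu HC S. split.
  - eexists; apply (XA1 u h r x); auto.
  - eexists; apply (XA2 u h r x); auto.
Qed.

Lemma Ddir_Xray w u h r x : fst u^2+snd u^2 = 1 -> C1 h -> supp r h ->
  Ddir w (Xray u h) x = Xray u (Ddir w h) x.
Proof.
  intros hu HC S.
  assert (E1 : d1 (Xray u h) x = Xray u (d1 h) x) by (apply is_derive_unique; apply (XA1 u h r x hu HC S)).
  assert (E2 : d2 (Xray u h) x = Xray u (d2 h) x) by (apply is_derive_unique; apply (XA2 u h r x hu HC S)).
  unfold Ddir at 1. rewrite E1, E2. unfold Ddir. symmetry. apply (Xray_lin u r); auto.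
  intro y; exact (proj1 (proj2 (proj2 HC y))). intro y; exact (proj2 (proj2 (proj2 HC y))). apply supp_d1; auto. apply supp_d2; auto.
Qed.

Lemma fdot_eq f1 f2 w : fdot f1 f2 w = (fun y => fst w * f1 y + snd w * f2 y).
Proof. extensionality y. unfold fdot, dot. cbn [fst snd]. ring. Qed.

Lemma C2_C1 h : C2 h -> C1 h. Proof. intros [H _]; exact H. Qed.
Lemma C2_d1 h : C2 h -> C1 (d1 h). Proof. intros [_ [H _]]; exact H. Qed.
Lemma C2_d2 h : C2 h -> C1 (d2 h). Proof. intros [_ [_ H]]; exact H. Qed.

Lemma C1_Ddir w h : C2 h -> C1 (Ddir w h).
Proof. intro H. unfold Ddir. apply C1_lin; [apply C2_d1 | apply C2_d2]; auto. Qed.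

Lemma part1 u v r f1 f2 : fst u ^ 2 + snd u ^ 2 = 1 -> fst v ^ 2 + snd v ^ 2 = 1 -> det2 v u <> 0 ->
  C2 f1 -> C2 f2 -> supp r f1 -> supp r f2 ->
  forall x, divf f1 f2 x = - (1 / det2 v u) * Ddir u (Ddir v (Tvl u v f1 f2)) x.
Proof.
  intros hu hv huv H1 H2 S1 S2 x.
  set (a := fun y => fst (perp u) * f1 y + snd (perp u) * f2 y).
  set (b := fun y => fst (perp v) * f1 y + snd (perp v) * f2 y).
  assert (ET : Tvl u v f1 f2 = fun y => (-1) * Xray u a y + 1 * Xray v b y).
  { extensionality y. unfold Tvl. rewrite !fdot_eq. fold a b. ring. }
  assert (Ca : C2 a) by (apply C2_lin; auto).
  assert (Cb : C2 b) by (apply C2_lin; auto).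
  assert (Sa : supp r a) by (apply supp_lin; auto).
  assert (Sb : supp r b) by (apply supp_lin; auto).
  set (c := Ddir v a).
  assert (Cc : C1 c) by (apply C1_Ddir; auto).
  assert (Sc : supp r c) by (apply supp_Ddir; auto).
  assert (E1 : Ddir v (Tvl u v f1 f2) = fun y => (-1) * Xray u c y + (-1) * b y).
  { rewrite ET. extensionality y.
    rewrite Ddir_lin; [| apply (exd_Xray u a r); auto; apply C2_C1; auto | apply (exd_Xray v b r); auto; apply C2_C1; auto].
    rewrite (Ddir_Xray v u a r), (Ddir_Xray v v b r); auto; try (apply C2_C1; auto).
    rewrite (XB v b r y); auto. fold c. ring. apply C2_C1; auto. }
  rewrite E1.
  rewrite Ddir_lin; [| apply (exd_Xray u c r); auto | apply C1_exd; apply C2_C1; auto].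
  rewrite (Ddir_Xray u u c r); auto. rewrite (XB u c r x); auto.
  unfold c, Ddir.
  assert (X1 := C1_exd f1 x (C2_C1 _ H1)).
  assert (X2 := C1_exd f2 x (C2_C1 _ H2)).
  unfold a, b. rewrite !d1_lin, !d2_lin; auto.
  unfold divf, det2, perp in *. cbn [fst snd] in *. field. auto.
Qed.

Lemma is_derive_mult' (f g : R -> R) x df dg : is_derive f x df -> is_derive g x dg ->
  is_derive (fun t => f t * g t) x (df * g x + f x * dg).
Proof. intros. apply (is_derive_mult f g); auto. intros; apply Rmult_comm. Qed.

Lemma cont_sec1 (H : pt -> R) b s : (forall p, continuous H p) -> continuous (fun s => H (s,b)) s.
Proof.
  intro Hc. apply (cont_compU H (fun s => s) (fun _ => b)); auto.
  apply continuous_id. apply continuous_const.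
Qed.

Lemma cont_sec2 (H : pt -> R) a s : (forall p, continuous H p) -> continuous (fun s => H (a,s)) s.
Proof.
  intro Hc. apply (cont_compU H (fun _ => a) (fun s => s)); auto.
  apply continuous_const. apply continuous_id.
Qed.

Lemma cont_swap (H : pt -> R) (p : pt) : (forall p, continuous H p) -> continuous (fun q : pt => H (snd q, fst q)) p.
Proof.
  intro Hc. destruct p as [x y].
  apply (cont_compU H (fun q : pt => snd q) (fun q : pt => fst q)); auto.
  apply continuous_snd. apply continuous_fst.
Qed.

Lemma swap2d f x y : continuity_2d_pt f x y -> continuity_2d_pt (fun u v => f v u) y x.
Proof. intros H eps. destruct (H eps) as [d Hd]. exists d. intros u v Hu Hv. apply Hd; auto. Qed.

Lemma mono_zero (F f : R -> R) a b : a < b -> (forall x, is_derive F x (f x)) ->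
  (forall x, a <= x <= b -> 0 <= f x) -> F a = 0 -> F b = 0 -> forall x, a < x < b -> f x = 0.
Proof.
  intros hab D P Fa Fb.
  assert (CF : forall x, continuity_pt F x).
  { intro x. apply (continuity_pt_filterlim F). apply (ex_derive_continuous F). eexists; apply D. }
  assert (Z : forall x, a <= x <= b -> F x = 0).
  { intros x Hx.
    destruct (MVT_gen F a x f) as [c [Hc Ec]]; [intros; apply D | intros; apply CF |].
    destruct (MVT_gen F x b f) as [c' [Hc' Ec']]; [intros; apply D | intros; apply CF |].
    rewrite Rmin_left in Hc by lra. rewrite Rmax_right in Hc by lra.
    rewrite Rmin_left in Hc' by lra. rewrite Rmax_right in Hc' by lra.
    assert (0 <= f c) by (apply P; lra). assert (0 <= f c') by (apply P; lra).
    assert (0 <= f c * (x - a)) by (apply Rmult_le_pos; lra).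
    assert (0 <= f c' * (b - x)) by (apply Rmult_le_pos; lra).
    lra. }
  intros x Hx.
  assert (D0 : is_derive F x 0).
  { apply is_derive_ext_loc with (f := fun _ => 0).
    - assert (hp : 0 < Rmin (x - a) (b - x)) by (apply Rmin_pos; lra).
      exists (mkposreal _ hp). intros t Ht. change (Rabs (t - x) < Rmin (x - a) (b - x)) in Ht.
      pose proof (Rmin_l (x - a) (b - x)). pose proof (Rmin_r (x - a) (b - x)).
      apply Rabs_lt_between in Ht. symmetry. apply Z. lra.
    - apply is_derive_Reals; apply derivable_pt_lim_const. }
  rewrite <- (is_derive_unique _ _ _ (D x)). apply is_derive_unique. exact D0.
Qed.

Lemma harm h1 h2 r : C1 h1 -> C1 h2 -> supp r h1 -> supp r h2 ->
  (forall x, d1 h1 x + d2 h2 x = 0) -> (forall x, d1 h2 x - d2 h1 x = 0) ->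
  forall x, h1 x = 0 /\ h2 x = 0.
Proof.
  intros C1h1 C1h2 S1 S2 Dv Cu.
  set (R0 := Rabs r + 1).
  assert (hR0 : 0 < R0) by (unfold R0; pose proof (Rabs_pos r); lra).
  assert (Out : forall a b, R0 <= Rabs a \/ R0 <= Rabs b -> h1 (a,b) = 0 /\ h2 (a,b) = 0).
  { intros a b H.
    assert (Hr : r^2 < a^2 + b^2).
    { rewrite <- (pow2_abs r), <- (pow2_abs a), <- (pow2_abs b).
      pose proof (Rabs_pos r). pose proof (Rabs_pos a). pose proof (Rabs_pos b).
      unfold R0 in H. destruct H; nra. }
    split; [apply S1 | apply S2]; exact Hr. }
  assert (AR0 : Rabs R0 = R0) by (apply Rabs_pos_eq; lra).
  assert (AR0' : Rabs (- R0) = R0) by (rewrite Rabs_Ropp; auto).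
  assert (Ch1 : forall p, continuous h1 p) by (intro p; exact (proj1 (proj2 C1h1 p))).
  assert (Ch2 : forall p, continuous h2 p) by (intro p; exact (proj1 (proj2 C1h2 p))).
  assert (C11 : forall p, continuous (d1 h1) p) by (intro p; exact (proj1 (proj2 (proj2 C1h1 p)))).
  assert (C12 : forall p, continuous (d2 h1) p) by (intro p; exact (proj2 (proj2 (proj2 C1h1 p)))).
  assert (C21 : forall p, continuous (d1 h2) p) by (intro p; exact (proj1 (proj2 (proj2 C1h2 p)))).
  assert (C22 : forall p, continuous (d2 h2) p) by (intro p; exact (proj2 (proj2 (proj2 C1h2 p)))).
  assert (E11 : forall a b, is_derive (fun s => h1 (s,b)) a (d1 h1 (a,b))) by
    (intros a b; exact (Derive_correct _ _ (proj1 (proj1 C1h1 (a,b))))).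
  assert (E12 : forall a b, is_derive (fun s => h1 (a,s)) b (d2 h1 (a,b))) by
    (intros a b; exact (Derive_correct _ _ (proj2 (proj1 C1h1 (a,b))))).
  assert (E21 : forall a b, is_derive (fun s => h2 (s,b)) a (d1 h2 (a,b))) by
    (intros a b; exact (Derive_correct _ _ (proj1 (proj1 C1h2 (a,b))))).
  assert (E22 : forall a b, is_derive (fun s => h2 (a,s)) b (d2 h2 (a,b))) by
    (intros a b; exact (Derive_correct _ _ (proj2 (proj1 C1h2 (a,b))))).
  assert (exR : forall (H : pt -> R) b c d, (forall p, continuous H p) -> ex_RInt (fun s => H (s,b)) c d).
  { intros H b c d HH. apply (@ex_RInt_continuous R_CompleteNormedModule). intros; apply cont_sec1; auto. }
  set (g := fun a b => RInt (fun s => h1 (s,b)) (-R0) a).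
  assert (G2 : forall a b, is_derive (fun z => g z b) a (h1 (a,b))).
  { intros a b. unfold g.
    apply (is_derive_RInt (fun s => h1 (s,b)) (fun z => RInt (fun s => h1 (s,b)) (-R0) z) (-R0) a).
    - apply filter_forall. intros; apply (@RInt_correct R_CompleteNormedModule); apply exR; auto.
    - apply cont_sec1; auto. }
  assert (G1 : forall a b, is_derive (fun z => g a z) b (h2 (a,b))).
  { intros a b. unfold g.
    assert (K := is_derive_RInt_param (fun z s => h1 (s,z)) (-R0) a b).
    assert (V : RInt (fun t => Derive (fun u => h1 (t,u)) b) (-R0) a = h2 (a,b)).
    { rewrite (RInt_ext _ (fun t => d1 h2 (t,b))).
      2: { intros t _. change (d2 h1 (t,b) = d1 h2 (t,b)). pose proof (Cu (t,b)). lra. }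
      rewrite (is_RInt_unique _ _ _ _ (is_RInt_derive (fun s => h2 (s,b)) (fun t => d1 h2 (t,b)) (-R0) a
          (fun t _ => E21 t b) (fun t _ => cont_sec1 (d1 h2) b t C21))).
      cbv beta. change (AbsRing.sort R_AbsRing) with R. rewrite (proj2 (Out (-R0) b (or_introl (Req_le _ _ (eq_sym AR0'))))).
      unfold minus, plus, opp; simpl. ring. }
    rewrite <- V. apply K.
    - apply filter_forall; intros z t _; eexists; apply (E12 t z).
    - intros t _. apply continuity_2d_pt_ext with (f := fun z s => d2 h1 (s,z)).
      { intros; symmetry; apply is_derive_unique; apply E12. }
      apply (cont2d (fun q => d2 h1 (snd q, fst q))). apply cont_swap; auto.
    - apply filter_forall; intros; apply exR; auto. }
  assert (Gc : forall a b, continuity_2d_pt g a b).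
  { intros a b. apply differentiable_continuity_pt.
    exists (Derive (fun z => g z b) a), (Derive (fun z => g a z) b).
    apply diff_partials.
    - intros; eexists; apply G2.
    - intros; eexists; apply G1.
    - apply continuity_2d_pt_ext with (f := fun u v => h1 (u,v)).
      { intros; symmetry; apply is_derive_unique; apply G2. }
      apply cont2d; auto.
    - apply continuity_2d_pt_ext with (f := fun u v => h2 (u,v)).
      { intros; symmetry; apply is_derive_unique; apply G1. }
      apply cont2d; auto. }
  assert (gc1 : forall b a, continuous (fun z => g z b) a).
  { intros b a. apply (ex_derive_continuous (fun z => g z b)). eexists; apply G2. }
  set (k := fun b a => h1 (a,b) * h1 (a,b) + h2 (a,b) * h2 (a,b)).
  assert (kc : forall b a, continuous (k b) a).
  { intros b a. unfold k.
    apply (continuous_plus (fun a => h1 (a,b) * h1 (a,b)) (fun a => h2 (a,b) * h2 (a,b))).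
    apply (continuous_mult (fun a => h1 (a,b)) (fun a => h1 (a,b))); apply cont_sec1; auto.
    apply (continuous_mult (fun a => h2 (a,b)) (fun a => h2 (a,b))); apply cont_sec1; auto. }
  assert (kex : forall b c d, ex_RInt (k b) c d).
  { intros. apply (@ex_RInt_continuous R_CompleteNormedModule). intros; apply kc. }
  set (J := fun b => RInt (fun a => h2 (a,b) * g a b) (-R0) R0).
  set (I := fun b => RInt (k b) (-R0) R0).
  assert (JD : forall b, is_derive J b (I b)).
  { intro b.
    assert (DE2 : forall a z, is_derive (fun z => h2 (a,z) * g a z) z (d2 h2 (a,z) * g a z + h2 (a,z) * h2 (a,z))).
    { intros a z. apply is_derive_mult'; [apply E22 | apply G1]. }
    assert (K := is_derive_RInt_param (fun z a => h2 (a,z) * g a z) (-R0) R0 b).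
    set (dP := fun a => d1 h1 (a,b) * g a b + h1 (a,b) * h1 (a,b)).
    assert (PD := is_RInt_derive (fun a => h1 (a,b) * g a b) dP (-R0) R0).
    assert (PD' : is_RInt dP (-R0) R0 (minus (h1 (R0,b) * g R0 b) (h1 (-R0,b) * g (-R0) b))).
    { apply PD.
      - intros a _. unfold dP. apply (is_derive_mult' (fun a => h1 (a,b)) (fun a => g a b)); [apply E11 | apply G2].
      - intros a _. unfold dP.
        apply (continuous_plus (fun a => d1 h1 (a,b) * g a b) (fun a => h1 (a,b) * h1 (a,b))).
        apply (continuous_mult (fun a => d1 h1 (a,b)) (fun a => g a b)); [apply cont_sec1; auto | apply gc1].
        apply (continuous_mult (fun a => h1 (a,b)) (fun a => h1 (a,b))); apply cont_sec1; auto. }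
    change (AbsRing.sort R_AbsRing) with R in PD'.
    rewrite (proj1 (Out R0 b (or_introl (Req_le _ _ (eq_sym AR0))))) in PD'.
    rewrite (proj1 (Out (-R0) b (or_introl (Req_le _ _ (eq_sym AR0'))))) in PD'.
    assert (IK : is_RInt (k b) (-R0) R0 (I b)) by (apply (@RInt_correct R_CompleteNormedModule); apply kex).
    assert (M := is_RInt_minus _ _ _ _ _ _ IK PD').
    assert (M' : is_RInt (fun t => Derive (fun u => h2 (t,u) * g t u) b) (-R0) R0
                    (minus (I b) (minus (0 * g R0 b) (0 * g (- R0) b)))).
    { eapply is_RInt_ext; [|exact M]. intros a _.
      symmetry. etransitivity; [apply is_derive_unique; exact (DE2 a b)|]. unfold dP, k, minus, plus, opp; simpl.
      pose proof (Dv (a,b)) as Dab. change (AbsRing.sort R_AbsRing) with R in *.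
      assert (Dab' : d2 h2 (a,b) = - d1 h1 (a,b)) by lra. rewrite Dab'. change (CompleteSpace.sort (CompleteNormedModule.CompleteSpace R_AbsRing R_CompleteNormedModule)) with R. ring. }
    assert (V : RInt (fun t => Derive (fun u => h2 (t,u) * g t u) b) (-R0) R0 = I b).
    { rewrite (is_RInt_unique _ _ _ _ M'). unfold minus, plus, opp; simpl. ring. }
    rewrite <- V.
    apply K.
    - apply filter_forall; intros z t _; eexists; apply (DE2 t z).
    - intros t _. apply continuity_2d_pt_ext with (f := fun z a => d2 h2 (a,z) * g a z + h2 (a,z) * h2 (a,z)).
      { intros; symmetry; apply is_derive_unique; apply DE2. }
      apply continuity_2d_pt_plus; apply continuity_2d_pt_mult.
      + apply (cont2d (fun q => d2 h2 (snd q, fst q))); apply cont_swap; auto.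
      + apply (swap2d g). apply Gc.
      + apply (cont2d (fun q => h2 (snd q, fst q))); apply cont_swap; auto.
      + apply (cont2d (fun q => h2 (snd q, fst q))); apply cont_swap; auto.
    - apply filter_forall; intro z. apply (@ex_RInt_continuous R_CompleteNormedModule). intros.
      apply (continuous_mult (fun a => h2 (a,z)) (fun a => g a z)); [apply cont_sec1; auto | apply gc1]. }
  assert (Jm : J (-R0) = 0).
  { unfold J. rewrite (RInt_ext _ (fun _ => 0)).
    - rewrite RInt_const. unfold scal; simpl; unfold mult; simpl. ring.
    - intros a _. change (AbsRing.sort R_AbsRing) with R. rewrite (proj2 (Out a (-R0) (or_intror (Req_le _ _ (eq_sym AR0'))))). apply Rmult_0_l. }
  assert (Jp : J R0 = 0).
  { unfold J. rewrite (RInt_ext _ (fun _ => 0)).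
    - rewrite RInt_const. unfold scal; simpl; unfold mult; simpl. ring.
    - intros a _. change (AbsRing.sort R_AbsRing) with R. rewrite (proj2 (Out a R0 (or_intror (Req_le _ _ (eq_sym AR0))))). apply Rmult_0_l. }
  assert (kpos : forall b a, 0 <= k b a) by (intros; unfold k; nra).
  assert (Ipos : forall b, 0 <= I b).
  { intro b. unfold I. apply RInt_ge_0; [lra | apply kex | intros; apply kpos]. }
  assert (IZ := mono_zero J I (-R0) R0 ltac:(lra) JD (fun b _ => Ipos b) Jm Jp).
  intros [a b].
  destruct (Rlt_dec (Rabs a) R0) as [Ha | Ha]; [destruct (Rlt_dec (Rabs b) R0) as [Hb | Hb]|].
  - apply Rabs_lt_between in Ha. apply Rabs_lt_between in Hb.
    assert (Ib : I b = 0) by (apply IZ; lra).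
    assert (KD : forall s, is_derive (fun s => RInt (k b) (-R0) s) s (k b s)).
    { intro s. apply (is_derive_RInt (k b) (fun s => RInt (k b) (-R0) s) (-R0) s).
      - apply filter_forall. intros; apply (@RInt_correct R_CompleteNormedModule); apply kex.
      - apply kc. }
    assert (K0 : RInt (k b) (-R0) (-R0) = 0) by (rewrite RInt_point; reflexivity).
    assert (kz := mono_zero (fun s => RInt (k b) (-R0) s) (k b) (-R0) R0 ltac:(lra) KD
                    (fun s _ => kpos b s) K0 Ib a ltac:(lra)).
    unfold k in kz. split; nra.
  - apply Out. right; lra.
  - apply Out. left; lra.
Qed.

Theorem theorem4 (u v : pt) (rho : R)
  (hu : fst u ^ 2 + snd u ^ 2 = 1) (hv : fst v ^ 2 + snd v ^ 2 = 1)
  (huv : det2 v u <> 0) (hrho : 0 < rho) :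
  (forall f1 f2 : pt -> R,
     C2c_disc rho f1 -> C2c_disc rho f2 ->
     forall x : pt,
       divf f1 f2 x = - (1 / det2 v u) * Ddir u (Ddir v (Tvl u v f1 f2)) x)
  /\
  (forall f1 f2 g1 g2 : pt -> R,
     C2c_disc rho f1 -> C2c_disc rho f2 -> curl_free f1 f2 ->
     C2c_disc rho g1 -> C2c_disc rho g2 -> curl_free g1 g2 ->
     (forall x : pt, Tvl u v f1 f2 x = Tvl u v g1 g2 x) ->
     forall x : pt, f1 x = g1 x /\ f2 x = g2 x).
Proof.
  split.
  - intros f1 f2 [C1' [r1 [r10 [_ S1]]]] [C2' [r2 [r20 [_ S2]]]] x.
    apply (part1 u v (Rmax r1 r2)); auto.
    + apply (supp_mono r1); auto. apply Rmax_l.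
    + apply (supp_mono r2); auto. apply Rmax_r.
  - intros f1 f2 g1 g2 [Cf1 [r1 [r10 [_ S1]]]] [Cf2 [r2 [r20 [_ S2]]]] Cf
           [Cg1 [r3 [r30 [_ S3]]]] [Cg2 [r4 [r40 [_ S4]]]] Cg HT x.
    set (Rr := Rmax (Rmax r1 r2) (Rmax r3 r4)).
    assert (M1 : r1 <= Rr) by (unfold Rr; eapply Rle_trans; [apply Rmax_l | apply Rmax_l]).
    assert (M2 : r2 <= Rr) by (unfold Rr; eapply Rle_trans; [apply Rmax_r | apply Rmax_l]).
    assert (M3 : r3 <= Rr) by (unfold Rr; eapply Rle_trans; [apply Rmax_l | apply Rmax_r]).
    assert (M4 : r4 <= Rr) by (unfold Rr; eapply Rle_trans; [apply Rmax_r | apply Rmax_r]).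
    assert (T1 : supp Rr f1) by (apply (supp_mono r1); auto).
    assert (T2 : supp Rr f2) by (apply (supp_mono r2); auto).
    assert (T3 : supp Rr g1) by (apply (supp_mono r3); auto).
    assert (T4 : supp Rr g2) by (apply (supp_mono r4); auto).
    set (h1 := fun y => 1 * f1 y + (-1) * g1 y).
    set (h2 := fun y => 1 * f2 y + (-1) * g2 y).
    assert (ET : Tvl u v f1 f2 = Tvl u v g1 g2) by (extensionality y; apply HT).
    assert (Hd : forall y, d1 h1 y + d2 h2 y = 0).
    { intro y. unfold h1, h2. rewrite d1_lin, d2_lin; try (apply C1_exd; apply C2_C1; auto).
      pose proof (part1 u v Rr f1 f2 hu hv huv Cf1 Cf2 T1 T2 y) as P1.
      pose proof (part1 u v Rr g1 g2 hu hv huv Cg1 Cg2 T3 T4 y) as P2.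
      rewrite ET in P1. unfold divf in *. lra. }
    assert (Hc : forall y, d1 h2 y - d2 h1 y = 0).
    { intro y. unfold h1, h2. rewrite d1_lin, d2_lin; try (apply C1_exd; apply C2_C1; auto).
      pose proof (Cf y). pose proof (Cg y). lra. }
    assert (H1 : C1 h1) by (apply C1_lin; apply C2_C1; auto).
    assert (H2 : C1 h2) by (apply C1_lin; apply C2_C1; auto).
    destruct (harm h1 h2 Rr H1 H2 (supp_lin _ _ _ _ _ T1 T3) (supp_lin _ _ _ _ _ T2 T4) Hd Hc x) as [Z1 Z2].
    unfold h1, h2 in Z1, Z2. split; lra.
Qed.
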